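(* Let $S$ be a self-adjoint subspace in $X^2$ and $A$ a closed Hermitian subspace in $X^2$ with $D(S)\subset D(A)$. If $A_s$ is $S_s$-bounded with $S_s$-bound less than $1$, then $S+A$ is a self-adjoint subspace in $X^2$.
   Context: $X$ is a complex Hilbert space and $X^2=X\times X$ carries the inner product $\langle (x,f),(y,g)\rangle=\langle x,y\rangle+\langle f,g\rangle$. A subspace $T$ in $X^2$ means a linear subspace of $X^2$ (a linear relation); a linear operator in $X$ is identified with its graph. Notation: $D(T)=\{x:(x,f)\in T \text{ for some } f\}$, $T(x)=\{f:(x,f)\in T\}$. The adjoint is $T^*=\{(y,g)\in X^2:\langle g,x\rangle=\langle y,f\rangle \text{ for all }(x,f)\in T\}$; $T$ is Hermitian if $T\subset T^*$ and self-adjoint if $T=T^*$. For subspaces $S,A$ in $X^2$, $S+A=\{(x,f+g):(x,f)\in S,(x,g)\in A\}$. For a closed subspace $T$, set $T_\infty=\{(0,g)\in X^2:(0,g)\in T\}$ and $T_s=T\ominus T_\infty$ (orthogonal complement of $T_\infty$ in $T$), so $T=T_s\oplus T_\infty$; $T_s$ is the graph of a linear operator (the operator part of $T$) with $D(T_s)=D(T)$ and $R(T_s)\subset T(0)^\perp$. For linear operators $U,V$ in $X$: $U$ is $V$-bounded if $D(V)\subset D(U)$ and there is $c\ge0$ with $\|Ux\|\le c(\|x\|+\|Vx\|)$ for $x\in D(V)$; the $V$-bound of $U$ is the infimum of all $a\ge 0$ for which some $b\ge0$ satisfies $\|Ux\|\le a\|Vx\|+b\|x\|$ for all $x\in D(V)$.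 *)

(* Defs.v *)
From Stdlib Require Import Reals.
Open Scope R_scope.
Set Implicit Arguments.

Record C := mkC { Re : R; Im : R }.
Definition C0 : C := mkC 0 0.
Definition C1 : C := mkC 1 0.
Definition Cadd (a b : C) : C := mkC (Re a + Re b) (Im a + Im b).
Definition Cmul (a b : C) : C :=
  mkC (Re a * Re b - Im a * Im b) (Re a * Im b + Im a * Re b).
Definition Cconj (a : C) : C := mkC (Re a) (- Im a).

Record Hilbert := {
  hcar :> Type;
  hzero : hcar;
  hadd : hcar -> hcar -> hcar;
  hopp : hcar -> hcar;
  hscal : C -> hcar -> hcar;
  hinner : hcar -> hcar -> C;
  hadd_assoc : forall x y z, hadd x (hadd y z) = hadd (hadd x y) z;
  hadd_comm : forall x y, hadd x y = hadd y x;
  hadd_zero : forall x, hadd x hzero = x;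
  hadd_opp : forall x, hadd x (hopp x) = hzero;
  hscal_one : forall x, hscal C1 x = x;
  hscal_assoc : forall a b x, hscal a (hscal b x) = hscal (Cmul a b) x;
  hscal_distr_v : forall a x y, hscal a (hadd x y) = hadd (hscal a x) (hscal a y);
  hscal_distr_s : forall a b x, hscal (Cadd a b) x = hadd (hscal a x) (hscal b x);
  hinner_add : forall x y z, hinner (hadd x y) z = Cadd (hinner x z) (hinner y z);
  hinner_scal : forall a x z, hinner (hscal a x) z = Cmul a (hinner x z);
  hinner_sym : forall x y, hinner y x = Cconj (hinner x y);
  hinner_pos : forall x, 0 <= Re (hinner x x);
  hinner_def : forall x, hinner x x = C0 -> x = hzero;
  hcomplete : forall u : nat -> hcar,
    (forall eps, 0 < eps -> exists N, forall m n, (N <= m)%nat -> (N <= n)%nat ->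
       sqrt (Re (hinner (hadd (u m) (hopp (u n))) (hadd (u m) (hopp (u n))))) < eps) ->
    exists l, forall eps, 0 < eps -> exists N, forall n, (N <= n)%nat ->
       sqrt (Re (hinner (hadd (u n) (hopp l)) (hadd (u n) (hopp l)))) < eps
}.

Arguments hzero {h}.
Arguments hadd {h}.
Arguments hopp {h}.
Arguments hscal {h}.
Arguments hinner {h}.

Definition hnorm {X : Hilbert} (x : X) : R := sqrt (Re (hinner x x)).
Definition hsub {X : Hilbert} (x y : X) : X := hadd x (hopp y).

Definition converges_to {X : Hilbert} (u : nat -> X) (l : X) : Prop :=
  forall eps, 0 < eps -> exists N, forall n, (N <= n)%nat -> hnorm (hsub (u n) l) < eps.

(** * Linear relations: a subset of X^2 is given as a binary predicate,
    [T x f] meaning (x,f) ∈ T. *)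
Definition rel (X : Hilbert) := X -> X -> Prop.

Definition inner2 {X : Hilbert} (x f y g : X) : C :=
  Cadd (hinner x y) (hinner f g).
Definition norm2 {X : Hilbert} (x f : X) : R :=
  sqrt (Re (inner2 x f x f)).

Definition is_subspace {X : Hilbert} (T : rel X) : Prop :=
  T hzero hzero /\
  (forall x f y g, T x f -> T y g -> T (hadd x y) (hadd f g)) /\
  (forall a x f, T x f -> T (hscal a x) (hscal a f)).

Definition is_closed {X : Hilbert} (T : rel X) : Prop :=
  forall (u v : nat -> X) (x f : X),
    (forall n, T (u n) (v n)) ->
    (forall eps, 0 < eps -> exists N, forall n, (N <= n)%nat ->
        norm2 (hsub (u n) x) (hsub (v n) f) < eps) ->
    T x f.

Definition dom {X : Hilbert} (T : rel X) (x : X) : Prop := exists f, T x f.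

Definition adjoint {X : Hilbert} (T : rel X) : rel X :=
  fun y g => forall x f, T x f -> hinner g x = hinner y f.

Definition rel_incl {X : Hilbert} (T U : rel X) : Prop := forall x f, T x f -> U x f.

Definition hermitian {X : Hilbert} (T : rel X) : Prop := rel_incl T (adjoint T).

Definition self_adjoint {X : Hilbert} (T : rel X) : Prop :=
  rel_incl T (adjoint T) /\ rel_incl (adjoint T) T.

Definition rel_sum {X : Hilbert} (S A : rel X) : rel X :=
  fun x h => exists f g, S x f /\ A x g /\ h = hadd f g.

Definition T_inf {X : Hilbert} (T : rel X) : rel X :=
  fun x g => x = hzero /\ T hzero g.

Definition ominus {X : Hilbert} (T M : rel X) : rel X :=
  fun x f => T x f /\ (forall y g, M y g -> inner2 x f y g = C0).

Definition T_s {X : Hilbert} (T : rel X) : rel X := ominus T (T_inf T).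

(** U is V-bounded (U, V graphs of operators) *)
Definition rel_bounded {X : Hilbert} (U V : rel X) : Prop :=
  (forall x, dom V x -> dom U x) /\
  exists c, 0 <= c /\
    forall x u v, V x v -> U x u -> hnorm u <= c * (hnorm x + hnorm v).

Definition bound_set {X : Hilbert} (U V : rel X) (a : R) : Prop :=
  0 <= a /\ exists b, 0 <= b /\
    forall x u v, V x v -> U x u -> hnorm u <= a * hnorm v + b * hnorm x.

Definition is_inf (P : R -> Prop) (m : R) : Prop :=
  (forall a, P a -> m <= a) /\ (forall m', (forall a, P a -> m' <= a) -> m' <= m).

Definition rel_bound {X : Hilbert} (U V : rel X) (r : R) : Prop :=
  is_inf (bound_set U V) r.

(* Main.v *)
Require Import Defs.
From Stdlib Require Import Reals Lra Psatz Classical ClassicalEpsilon.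
Open Scope R_scope.

Lemma C_ext (a b : Defs.C) : Re a = Re b -> Im a = Im b -> a = b.
Proof. destruct a, b; simpl; intros; subst; reflexivity. Qed.

Definition Copp (a : Defs.C) : Defs.C := mkC (- Re a) (- Im a).

Lemma hinner_zero_l {X : Hilbert} (z : X) : hinner hzero z = C0.
Proof.
  pose proof (hinner_add _ hzero hzero z) as H. rewrite hadd_zero in H.
  assert (H1 := f_equal Re H). assert (H2 := f_equal Im H). simpl in H1, H2.
  apply C_ext; simpl; lra.
Qed.

Lemma hinner_opp_l {X : Hilbert} (x z : X) : hinner (hopp x) z = Copp (hinner x z).
Proof.
  pose proof (hinner_add _ x (hopp x) z) as H. rewrite hadd_opp, hinner_zero_l in H.
  assert (H1 := f_equal Re H). assert (H2 := f_equal Im H). simpl in H1, H2.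
  apply C_ext; simpl; lra.
Qed.

Lemma hinner_add_r {X : Hilbert} (z x y : X) :
  hinner z (hadd x y) = Cadd (hinner z x) (hinner z y).
Proof.
  rewrite (hinner_sym _ (hadd x y) z), hinner_add, (hinner_sym _ x z), (hinner_sym _ y z).
  apply C_ext; simpl; ring.
Qed.

Lemma hinner_scal_r {X : Hilbert} (z : X) a (x : X) :
  hinner z (hscal a x) = Cmul (Cconj a) (hinner z x).
Proof.
  rewrite (hinner_sym _ (hscal a x) z), hinner_scal, (hinner_sym _ x z).
  apply C_ext; simpl; ring.
Qed.

Lemma hinner_opp_r {X : Hilbert} (z x : X) : hinner z (hopp x) = Copp (hinner z x).
Proof.
  rewrite (hinner_sym _ (hopp x) z), hinner_opp_l, (hinner_sym _ x z).
  apply C_ext; simpl; ring.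
Qed.

Lemma hinner_zero_r {X : Hilbert} (z : X) : hinner z hzero = C0.
Proof.
  rewrite (hinner_sym _ hzero z), hinner_zero_l. apply C_ext; simpl; ring.
Qed.

Ltac expand := unfold hsub, inner2 in *;
  repeat rewrite ?hinner_add, ?hinner_add_r, ?hinner_scal, ?hinner_scal_r,
    ?hinner_opp_l, ?hinner_opp_r, ?hinner_zero_l, ?hinner_zero_r in *.

Lemma hext {X : Hilbert} (x y : X) : (forall z, hinner x z = hinner y z) -> x = y.
Proof.
  intro H.
  assert (E : hadd x (hopp y) = hzero).
  { apply hinner_def. rewrite hinner_add, hinner_opp_l, H. apply C_ext; simpl; ring. }
  rewrite <- (hadd_zero _ x), <- (hadd_opp _ y), (hadd_comm _ y), hadd_assoc, E,
    hadd_comm, hadd_zero. reflexivity.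
Qed.

Ltac vec := apply hext; let z := fresh "z" in intro z; expand; apply C_ext; simpl; ring.

Definition nsq {X : Hilbert} (x : X) := Re (hinner x x).

Lemma Im_self {X : Hilbert} (x : X) : Im (hinner x x) = 0.
Proof. pose proof (f_equal Im (hinner_sym _ x x)). simpl in H. lra. Qed.

Lemma sym_Re {X : Hilbert} (x y : X) : Re (hinner y x) = Re (hinner x y).
Proof. rewrite hinner_sym. reflexivity. Qed.
Lemma sym_Im {X : Hilbert} (x y : X) : Im (hinner y x) = - Im (hinner x y).
Proof. rewrite hinner_sym. reflexivity. Qed.

Lemma nsq_nonneg {X : Hilbert} (x : X) : 0 <= nsq x.
Proof. apply hinner_pos. Qed.

Lemma nsq0 {X : Hilbert} (x : X) : nsq x = 0 -> x = hzero.
Proof. intro H. apply hinner_def. apply C_ext; simpl; [exact H| apply Im_self]. Qed.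

Lemma hnorm_sq {X : Hilbert} (x : X) : hnorm x * hnorm x = nsq x.
Proof. apply sqrt_sqrt, nsq_nonneg. Qed.

Lemma hnorm_nonneg {X : Hilbert} (x : X) : 0 <= hnorm x.
Proof. apply sqrt_pos. Qed.

Lemma sqrt_le_of (A B : R) : 0 <= B -> A <= B * B -> sqrt A <= B.
Proof. intros. rewrite <- (sqrt_square B) by auto. apply sqrt_le_1_alt; auto. Qed.

Lemma CS_Re {X : Hilbert} (x y : X) : Re (hinner x y) <= hnorm x * hnorm y.
Proof.
  pose proof (hnorm_sq x). pose proof (hnorm_sq y).
  pose proof (hnorm_nonneg x). pose proof (hnorm_nonneg y).
  destruct (Req_dec (nsq y) 0) as [E|E].
  - apply nsq0 in E. subst y. rewrite hinner_zero_r. simpl. nra.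
  - set (r := Re (hinner x y)).
    pose proof (nsq_nonneg (hadd (hscal (mkC (nsq y) 0) x) (hscal (mkC (- r) 0) y))) as P.
    unfold nsq in P. expand. simpl in P. rewrite (sym_Re x y) in P.
    rewrite Im_self in P. rewrite (Im_self y) in P. fold r in P.
    pose proof (nsq_nonneg y). unfold nsq in *.
    assert (Q : r * r <= Re (hinner x x) * Re (hinner y y)).
    { assert (0 < Re (hinner y y)) by lra.
      assert (Re (hinner y y) * (Re (hinner x x) * Re (hinner y y) - r * r) >= 0) by nra.
      nra. }
    clearbody r. assert (hnorm x * hnorm y * (hnorm x * hnorm y) = Re (hinner x x) * Re (hinner y y)) by nra.
    assert (0 <= hnorm x * hnorm y) by nra.
    destruct (Rle_dec r 0); [nra|].
    destruct (Rle_dec r (hnorm x * hnorm y)); [assumption|]. nra.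
Qed.

Lemma nsq_scal {X : Hilbert} c (x : X) :
  nsq (hscal c x) = (Re c * Re c + Im c * Im c) * nsq x.
Proof. unfold nsq. expand. simpl. rewrite Im_self. ring. Qed.

Lemma hnorm_scal {X : Hilbert} c (x : X) :
  hnorm (hscal c x) = sqrt (Re c * Re c + Im c * Im c) * hnorm x.
Proof.
  unfold hnorm. fold (nsq (hscal c x)). fold (nsq x). rewrite nsq_scal.
  apply sqrt_mult; [nra| apply nsq_nonneg].
Qed.

Lemma hopp_scal {X : Hilbert} (x : X) : hopp x = hscal (mkC (-1) 0) x.
Proof. vec. Qed.

Lemma hnorm_opp {X : Hilbert} (x : X) : hnorm (hopp x) = hnorm x.
Proof.
  rewrite hopp_scal, hnorm_scal. simpl.
  replace (-1 * -1 + 0 * 0) with 1 by ring. rewrite sqrt_1. ring.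
Qed.

Lemma hnorm_scal_i {X : Hilbert} m (x : X) : hnorm (hscal (mkC 0 m) x) = Rabs m * hnorm x.
Proof.
  rewrite hnorm_scal. simpl. replace (0 * 0 + m * m) with (Rsqr m) by (unfold Rsqr; ring).
  rewrite sqrt_Rsqr_abs. reflexivity.
Qed.

Lemma CS_abs_Re {X : Hilbert} (x y : X) : Rabs (Re (hinner x y)) <= hnorm x * hnorm y.
Proof.
  pose proof (CS_Re x y). pose proof (CS_Re (hopp x) y).
  rewrite hinner_opp_l, hnorm_opp in H0. simpl in H0.
  apply Rabs_le. lra.
Qed.

Lemma CS_abs_Im {X : Hilbert} (x y : X) : Rabs (Im (hinner x y)) <= hnorm x * hnorm y.
Proof.
  pose proof (CS_abs_Re x (hscal (mkC 0 1) y)).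
  rewrite hinner_scal_r, hnorm_scal_i in H. simpl in H.
  replace (0 * Re (hinner x y) - - (1) * Im (hinner x y)) with (Im (hinner x y)) in H by ring.
  rewrite Rabs_R1 in H. lra.
Qed.

Lemma hnorm_tri {X : Hilbert} (x y : X) : hnorm (hadd x y) <= hnorm x + hnorm y.
Proof.
  apply sqrt_le_of. pose proof (hnorm_nonneg x); pose proof (hnorm_nonneg y); lra.
  pose proof (CS_Re x y). pose proof (hnorm_sq x). pose proof (hnorm_sq y).
  unfold nsq in *. expand. simpl. rewrite (sym_Re x y). nra.
Qed.

Lemma dist_tri {X : Hilbert} (a b c : X) :
  hnorm (hsub a c) <= hnorm (hsub a b) + hnorm (hsub b c).
Proof.
  replace (hsub a c) with (hadd (hsub a b) (hsub b c)) by vec. apply hnorm_tri.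
Qed.

Lemma dist_sym {X : Hilbert} (a b : X) : hnorm (hsub a b) = hnorm (hsub b a).
Proof. replace (hsub a b) with (hopp (hsub b a)) by vec. apply hnorm_opp. Qed.

Lemma hsub_eq0 {X : Hilbert} (x y : X) : hsub x y = hzero -> x = y.
Proof.
  intro H. replace x with (hadd (hsub x y) y) by vec. rewrite H. vec.
Qed.

Lemma norm_small {X : Hilbert} (v : X) : (forall eps, 0 < eps -> hnorm v < eps) -> v = hzero.
Proof.
  intro H. apply nsq0. pose proof (hnorm_nonneg v).
  destruct (Req_dec (hnorm v) 0) as [E|E].
  - apply sqrt_eq_0; [apply nsq_nonneg| exact E].
  - specialize (H (hnorm v)). lra.
Qed.

Lemma hnorm_sub_scal {X : Hilbert} c (x y : X) :
  hsub (hscal c x) (hscal c y) = hscal c (hsub x y).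
Proof. vec. Qed.

Definition Cauchy {X : Hilbert} (u : nat -> X) := forall eps, 0 < eps -> exists N,
  forall m n, (N <= m)%nat -> (N <= n)%nat -> hnorm (hsub (u m) (u n)) < eps.

Lemma complete {X : Hilbert} (u : nat -> X) : Cauchy u -> exists l, converges_to u l.
Proof. intro H. apply (hcomplete X u H). Qed.

Lemma conv_cauchy {X : Hilbert} (u : nat -> X) l : converges_to u l -> Cauchy u.
Proof.
  intros H eps He. destruct (H (eps/2)) as [N HN]; [lra|]. exists N. intros m n Hm Hn.
  pose proof (dist_tri (u m) l (u n)) as T. rewrite (dist_sym l) in T.
  pose proof (HN m Hm). pose proof (HN n Hn). lra.
Qed.

Lemma lim_unique {X : Hilbert} (u : nat -> X) l1 l2 :
  converges_to u l1 -> converges_to u l2 -> l1 = l2.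
Proof.
  intros H1 H2. apply hsub_eq0, norm_small. intros eps He.
  destruct (H1 (eps/2)) as [N1 HN1]; [lra|]. destruct (H2 (eps/2)) as [N2 HN2]; [lra|].
  pose proof (dist_tri l1 (u (max N1 N2)) l2) as T. rewrite (dist_sym l1 (u (max N1 N2))) in T.
  pose proof (HN1 (max N1 N2) (Nat.le_max_l _ _)). pose proof (HN2 (max N1 N2) (Nat.le_max_r _ _)).
  lra.
Qed.

Lemma inner_cont {X : Hilbert} (u : nat -> X) x y : converges_to u x ->
  forall eps, 0 < eps -> exists N, forall n, (N <= n)%nat ->
    Rabs (Re (hinner (u n) y) - Re (hinner x y)) < eps /\
    Rabs (Im (hinner (u n) y) - Im (hinner x y)) < eps.
Proof.
  intros H eps He. pose proof (hnorm_nonneg y) as Hy.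
  set (d := eps / (hnorm y + 1)).
  assert (Hd : 0 < d) by (unfold d; apply Rdiv_lt_0_compat; lra).
  assert (Hd2 : d * (hnorm y + 1) = eps) by (unfold d; field; lra).
  destruct (H d Hd) as [N HN]. exists N. intros n Hn. specialize (HN n Hn).
  pose proof (hnorm_nonneg (hsub (u n) x)).
  assert (E1 : Re (hinner (u n) y) - Re (hinner x y) = Re (hinner (hsub (u n) x) y))
    by (expand; simpl; ring).
  assert (E2 : Im (hinner (u n) y) - Im (hinner x y) = Im (hinner (hsub (u n) x) y))
    by (expand; simpl; ring).
  rewrite E1, E2. pose proof (CS_abs_Re (hsub (u n) x) y). pose proof (CS_abs_Im (hsub (u n) x) y).
  assert (hnorm (hsub (u n) x) * hnorm y <= d * hnorm y) by nra.
  split; nra.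
Qed.

Lemma eq_close (a b : R) : (forall eps, 0 < eps -> Rabs (a - b) < eps) -> a = b.
Proof.
  intro H. destruct (Req_dec a b) as [|E]; auto.
  specialize (H (Rabs (a - b))). assert (0 < Rabs (a - b)).
  { apply Rabs_pos_lt. lra. } lra.
Qed.

Lemma sa_closed {X : Hilbert} (S : rel X) : self_adjoint S ->
  forall xs fs x f, (forall n, S (xs n) (fs n)) -> converges_to xs x -> converges_to fs f -> S x f.
Proof.
  intros [HS1 HS2] xs fs x f Hn Hx Hf. apply HS2. intros y g Hyg.
  assert (E : forall n, hinner (fs n) y = hinner (xs n) g) by (intro n; exact (HS1 _ _ (Hn n) y g Hyg)).
  apply C_ext; apply eq_close; intros eps He.
  - destruct (inner_cont fs f y Hf (eps/2)) as [N1 H1]; [lra|].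
    destruct (inner_cont xs x g Hx (eps/2)) as [N2 H2]; [lra|].
    set (n := max N1 N2). destruct (H1 n (Nat.le_max_l _ _)) as [A _].
    destruct (H2 n (Nat.le_max_r _ _)) as [B _]. rewrite E in A.
    apply Rabs_def2 in A; apply Rabs_def2 in B. apply Rabs_def1; lra.
  - destruct (inner_cont fs f y Hf (eps/2)) as [N1 H1]; [lra|].
    destruct (inner_cont xs x g Hx (eps/2)) as [N2 H2]; [lra|].
    set (n := max N1 N2). destruct (H1 n (Nat.le_max_l _ _)) as [_ A].
    destruct (H2 n (Nat.le_max_r _ _)) as [_ B]. rewrite E in A.
    apply Rabs_def2 in A; apply Rabs_def2 in B. apply Rabs_def1; lra.
Qed.

Lemma rel_sub {X : Hilbert} (T : rel X) : is_subspace T ->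
  forall x f y g, T x f -> T y g -> T (hsub x y) (hsub f g).
Proof.
  intros [H0 [Ha Hs]] x f y g H1 H2. unfold hsub. rewrite !hopp_scal. apply Ha; auto.
Qed.

Lemma Ts_subspace {X : Hilbert} (T : rel X) : is_subspace T -> is_subspace (T_s T).
Proof.
  intros HT. destruct HT as [H0 [Ha Hs]]. unfold T_s, ominus. split; [|split].
  - split; auto. intros y g _. expand. apply C_ext; simpl; ring.
  - intros x f y g [A1 A2] [B1 B2]. split; auto. intros y' g' Hyg.
    specialize (A2 y' g' Hyg). specialize (B2 y' g' Hyg). expand.
    pose proof (f_equal Re A2); pose proof (f_equal Im A2); pose proof (f_equal Re B2); pose proof (f_equal Im B2).
    simpl in *. apply C_ext; simpl; lra.
  - intros a x f [A1 A2]. split; auto. intros y' g' Hyg.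
    specialize (A2 y' g' Hyg). expand.
    pose proof (f_equal Re A2); pose proof (f_equal Im A2).
    simpl in *. apply C_ext; simpl; nra.
Qed.

Lemma sq_lt_of {X : Hilbert} (x : X) e : hnorm x < e -> nsq x < e * e.
Proof. intro H. pose proof (hnorm_sq x). pose proof (hnorm_nonneg x). nra. Qed.

Lemma norm_lt_of {X : Hilbert} (x : X) e : 0 < e -> nsq x < e * e -> hnorm x < e.
Proof.
  intros He H. unfold hnorm. rewrite <- (sqrt_square e) by lra.
  apply sqrt_lt_1_alt. split; [apply nsq_nonneg| exact H].
Qed.

Lemma parallelogram {X : Hilbert} (w m1 m2 : X) :
  nsq (hsub m1 m2) + 4 * nsq (hsub w (hscal (mkC (/2) 0) (hadd m1 m2))) =
  2 * nsq (hsub w m1) + 2 * nsq (hsub w m2).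
Proof. unfold nsq. expand. simpl. field. Qed.

Lemma proj_thm {X : Hilbert} (M : X -> Prop) : M hzero ->
  (forall x y, M x -> M y -> M (hadd x y)) -> (forall c x, M x -> M (hscal c x)) ->
  (forall u l, (forall n, M (u n)) -> converges_to u l -> M l) ->
  forall w, exists p, M p /\ forall m, M m -> hinner (hsub w p) m = C0.
Proof.
  intros M0 Ma Ms Mc w.
  set (E := fun r => exists m, M m /\ r = - hnorm (hsub w m)).
  assert (Eb : bound E).
  { exists 0. intros r [m [_ ->]]. pose proof (hnorm_nonneg (hsub w m)). lra. }
  assert (Ene : exists r, E r) by (exists (- hnorm (hsub w hzero)); exists hzero; auto).
  destruct (completeness E Eb Ene) as [L [HL1 HL2]].
  set (d := - L).
  assert (Hd1 : forall m, M m -> d <= hnorm (hsub w m)).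
  { intros m Hm. assert (- hnorm (hsub w m) <= L) by (apply HL1; exists m; auto). unfold d; lra. }
  assert (Hd0 : 0 <= d).
  { assert (L <= 0). { apply HL2. intros r [m [_ ->]]. pose proof (hnorm_nonneg (hsub w m)). lra. }
    unfold d; lra. }
  assert (Hd2 : forall e, 0 < e -> exists m, M m /\ hnorm (hsub w m) < d + e).
  { intros e He. apply NNPP. intro Hn.
    assert (L <= - (d + e)).
    { apply HL2. intros r [m [Hm ->]].
      destruct (Rle_dec (d + e) (hnorm (hsub w m))) as [|Hl]; [lra|].
      exfalso. apply Hn. exists m. split; auto. lra. }
    unfold d in *; lra. }
  assert (Hpos : forall n : nat, 0 < (/2) ^ n) by (intro n; apply pow_lt; lra).
  set (ms := fun n => proj1_sig (constructive_indefinite_description _ (Hd2 _ (Hpos n)))).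
  assert (Hms : forall n, M (ms n) /\ hnorm (hsub w (ms n)) < d + (/2)^n)
    by (intro n; exact (proj2_sig (constructive_indefinite_description _ (Hd2 _ (Hpos n))))).
  assert (Hpar : forall m1 m2 e1 e2, M m1 -> M m2 -> 0 < e1 -> 0 < e2 ->
     hnorm (hsub w m1) < d + e1 -> hnorm (hsub w m2) < d + e2 ->
     nsq (hsub m1 m2) <= 4 * d * (e1 + e2) + 2 * e1 * e1 + 2 * e2 * e2).
  { intros m1 m2 e1 e2 H1 H2 He1 He2 L1 L2.
    pose proof (parallelogram w m1 m2) as P.
    assert (Mm : M (hscal (mkC (/2) 0) (hadd m1 m2))) by auto.
    pose proof (Hd1 _ Mm) as D. pose proof (hnorm_sq (hsub w (hscal (mkC (/2) 0) (hadd m1 m2)))).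
    apply sq_lt_of in L1. apply sq_lt_of in L2. nra. }
  assert (Hc : Cauchy ms).
  { intros eps He. set (delta := Rmin 1 (eps * eps / (8 * d + 4))).
    assert (Hdl : 0 < delta).
    { unfold delta. apply Rmin_pos; [lra|]. apply Rdiv_lt_0_compat; nra. }
    assert (Hdl1 : delta <= 1) by apply Rmin_l.
    assert (Hdl2 : delta * (8 * d + 4) <= eps * eps).
    { assert (delta <= eps * eps / (8 * d + 4)) by apply Rmin_r.
      assert (eps * eps / (8 * d + 4) * (8 * d + 4) = eps * eps) by (field; lra). nra. }
    destruct (pow_lt_1_zero (/2)) with (y := delta) as [N HN].
    { rewrite Rabs_pos_eq; lra. } { lra. }
    exists N. intros m n Hm Hn. apply norm_lt_of; [lra|].
    pose proof (HN m Hm) as A. pose proof (HN n Hn) as B.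
    rewrite Rabs_pos_eq in A by (apply Rlt_le, Hpos). rewrite Rabs_pos_eq in B by (apply Rlt_le, Hpos).
    destruct (Hms m) as [M1 L1]. destruct (Hms n) as [M2 L2].
    pose proof (Hpar _ _ _ _ M1 M2 (Hpos m) (Hpos n) L1 L2).
    pose proof (Hpos m). pose proof (Hpos n). nra. }
  destruct (complete ms Hc) as [p Hp].
  assert (Mp : M p) by (apply (Mc ms p); [intro n; apply Hms | exact Hp]).
  assert (Hwp : hnorm (hsub w p) <= d).
  { destruct (Rle_dec (hnorm (hsub w p)) d) as [|Hl]; [assumption|]. exfalso.
    set (e := hnorm (hsub w p) - d).
    assert (He : 0 < e) by (unfold e; lra).
    destruct (Hp (e/2)) as [N1 HN1]; [lra|].
    destruct (pow_lt_1_zero (/2)) with (y := e/2) as [N2 HN2]; [rewrite Rabs_pos_eq; lra| lra|].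
    set (n := max N1 N2).
    pose proof (HN1 n (Nat.le_max_l _ _)). pose proof (HN2 n (Nat.le_max_r _ _)).
    rewrite Rabs_pos_eq in H0 by (apply Rlt_le, Hpos).
    pose proof (dist_tri w (ms n) p). destruct (Hms n) as [_ L1]. unfold e in *. lra. }
  exists p. split; auto. intros m Hm.
  assert (Hmin : forall q, M q -> nsq (hsub w p) <= nsq (hsub w q)).
  { intros q Hq. pose proof (Hd1 q Hq). rewrite <- hnorm_sq, <- hnorm_sq.
    pose proof (hnorm_nonneg (hsub w p)). nra. }
  set (r := hsub w p). set (s := / (nsq m + 1)).
  pose proof (nsq_nonneg m) as Hnm.
  assert (Hs1 : s * (nsq m + 1) = 1) by (unfold s; field; lra).
  assert (Hs0 : 0 < s) by (unfold s; apply Rinv_0_lt_compat; lra).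
  set (t := mkC (s * Re (hinner r m)) (s * Im (hinner r m))).
  assert (P := Hmin (hadd p (hscal t m)) (Ma _ _ Mp (Ms _ _ Hm))).
  replace (hsub w (hadd p (hscal t m))) with (hsub r (hscal t m)) in P by (unfold r; vec).
  fold r in P. clearbody r. unfold nsq in P, Hs1, Hnm. unfold t in P. expand. simpl in P.
  rewrite (sym_Re r m), (sym_Im r m), (Im_self m) in P.
  set (a := Re (hinner r m)) in *. set (b := Im (hinner r m)) in *.
  set (nm := Re (hinner m m)) in *.
  assert (Q : s * (a * a + b * b) * (2 - s * nm) <= 0) by nra.
  assert (0 < s * (2 - s * nm)) by nra.
  assert (a * a + b * b <= 0) by nra.
  apply C_ext; simpl; fold a b; nra.
Qed.

Lemma herm_real {X : Hilbert} (S : rel X) x f : self_adjoint S -> S x f -> Im (hinner f x) = 0.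
Proof.
  intros [H1 _] H. pose proof (H1 x f H x f H) as E.
  rewrite (hinner_sym _ f x) in E. pose proof (f_equal Im E). simpl in H0. lra.
Qed.

Lemma key_id {X : Hilbert} (S : rel X) m x f : self_adjoint S -> S x f ->
  nsq (hsub f (hscal (mkC 0 m) x)) = nsq f + m * m * nsq x.
Proof.
  intros HS H. pose proof (herm_real S x f HS H).
  unfold nsq. expand. simpl. rewrite (sym_Re f x), (sym_Im f x), ?(Im_self x), ?(Im_self f). nra.
Qed.

Lemma surj {X : Hilbert} (S : rel X) : is_subspace S -> self_adjoint S ->
  forall m, m <> 0 -> forall w, exists x f, S x f /\ hsub f (hscal (mkC 0 m) x) = w.
Proof.
  intros HSs HS m Hm w. set (lam := mkC 0 m).
  set (M := fun u => exists x f, S x f /\ u = hsub f (hscal lam x)).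
  assert (Hm2 : 0 < m * m) by nra.
  assert (M0 : M hzero).
  { exists hzero, hzero. split; [apply HSs| vec]. }
  assert (Ma : forall x y, M x -> M y -> M (hadd x y)).
  { intros u v [x1 [f1 [H1 ->]]] [x2 [f2 [H2 ->]]]. exists (hadd x1 x2), (hadd f1 f2).
    split; [apply HSs; auto| vec]. }
  assert (Ms : forall c x, M x -> M (hscal c x)).
  { intros c u [x1 [f1 [H1 ->]]]. exists (hscal c x1), (hscal c f1).
    split; [apply HSs; auto| vec]. }
  assert (Mc : forall u l, (forall n, M (u n)) -> converges_to u l -> M l).
  { intros u l Hu Hl.
    set (xs := fun n => proj1_sig (constructive_indefinite_description _ (Hu n))).
    assert (Hx : forall n, exists f, S (xs n) f /\ u n = hsub f (hscal lam (xs n)))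
      by (intro n; exact (proj2_sig (constructive_indefinite_description _ (Hu n)))).
    set (fs := fun n => proj1_sig (constructive_indefinite_description _ (Hx n))).
    assert (Hf : forall n, S (xs n) (fs n) /\ u n = hsub (fs n) (hscal lam (xs n)))
      by (intro n; exact (proj2_sig (constructive_indefinite_description _ (Hx n)))).
    clearbody fs xs.
    assert (Dif : forall a b, nsq (hsub (u a) (u b)) =
        nsq (hsub (fs a) (fs b)) + m * m * nsq (hsub (xs a) (xs b))).
    { intros a b. rewrite <- (key_id S m); [| exact HS| apply rel_sub; auto; apply Hf].
      f_equal. destruct (Hf a) as [_ ->]. destruct (Hf b) as [_ ->]. unfold lam. vec. }
    pose proof (conv_cauchy u l Hl) as Cu.
    assert (Cf : Cauchy fs).
    { intros eps He. destruct (Cu eps He) as [N HN]. exists N. intros a b Ha Hb.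
      apply norm_lt_of; auto. specialize (HN a b Ha Hb). apply sq_lt_of in HN.
      rewrite Dif in HN. pose proof (nsq_nonneg (hsub (xs a) (xs b))). nra. }
    assert (Cx : Cauchy xs).
    { intros eps He. destruct (Cu (eps * Rabs m)) as [N HN].
      { apply Rmult_lt_0_compat; auto. apply Rabs_pos_lt; auto. }
      exists N. intros a b Ha Hb.
      apply norm_lt_of; auto. specialize (HN a b Ha Hb). apply sq_lt_of in HN.
      rewrite Dif in HN. pose proof (nsq_nonneg (hsub (fs a) (fs b))).
      assert (Rabs m * Rabs m = m * m) by (rewrite <- Rabs_mult; apply Rabs_pos_eq; nra).
      nra. }
    destruct (complete _ Cf) as [f Lf]. destruct (complete _ Cx) as [x Lx].
    exists x, f. split.
    - apply (sa_closed S HS xs fs x f); auto. intro n; apply Hf.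
    - apply (lim_unique u); auto. intros eps He.
      destruct (Lf (eps/2)) as [N1 H1]; [lra|].
      destruct (Lx (eps / 2 / (Rabs m + 1))) as [N2 H2].
      { apply Rdiv_lt_0_compat; [lra|]. pose proof (Rabs_pos m). lra. }
      exists (max N1 N2). intros n Hn.
      specialize (H1 n (Nat.le_trans _ _ _ (Nat.le_max_l _ _) Hn)).
      specialize (H2 n (Nat.le_trans _ _ _ (Nat.le_max_r _ _) Hn)).
      destruct (Hf n) as [_ ->].
      replace (hsub (hsub (fs n) (hscal lam (xs n))) (hsub f (hscal lam x)))
        with (hadd (hsub (fs n) f) (hopp (hscal lam (hsub (xs n) x)))) by vec.
      pose proof (hnorm_tri (hsub (fs n) f) (hopp (hscal lam (hsub (xs n) x)))).
      rewrite hnorm_opp in H. unfold lam in H. rewrite hnorm_scal_i in H.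
      pose proof (Rabs_pos m). pose proof (hnorm_nonneg (hsub (xs n) x)).
      assert (Rabs m * hnorm (hsub (xs n) x) <= Rabs m * (eps / 2 / (Rabs m + 1))) by nra.
      assert (Rabs m * (eps / 2 / (Rabs m + 1)) < eps / 2).
      { apply (Rmult_lt_reg_r (Rabs m + 1)); [lra|].
        replace (Rabs m * (eps / 2 / (Rabs m + 1)) * (Rabs m + 1)) with (Rabs m * (eps/2)) by (field; lra).
        nra. }
      unfold lam in *. lra. }
  destruct (proj_thm M M0 Ma Ms Mc w) as [p [Mp Hq]].
  set (q := hsub w p) in Hq.
  assert (Sq : S q (hscal (mkC 0 (- m)) q)).
  { apply HS. intros x f Hxf. specialize (Hq (hsub f (hscal lam x)) (ex_intro _ x (ex_intro _ f (conj Hxf eq_refl)))).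
    unfold lam in Hq. expand.
    pose proof (f_equal Re Hq). pose proof (f_equal Im Hq). simpl in *.
    apply C_ext; simpl; lra. }
  assert (q = hzero).
  { apply nsq0. destruct HS as [HS1 _]. pose proof (HS1 _ _ Sq _ _ Sq) as E.
    expand. pose proof (f_equal Im E). simpl in H. rewrite Im_self in H. unfold nsq.
    apply (Rmult_eq_reg_l m); [|auto]. lra. }
  destruct Mp as [x [f [Hxf Hp]]]. exists x, f. split; auto.
  rewrite <- Hp. symmetry. apply hsub_eq0. exact H.
Qed.

Lemma Ts_exists {X : Hilbert} (S : rel X) : is_subspace S -> self_adjoint S ->
  forall x f, S x f -> exists q, T_s S x q.
Proof.
  intros HSs HS x f Hxf.
  destruct HSs as [S0 [Sa Ss]] eqn:E.
  assert (Mc : forall u l, (forall n, S hzero (u n)) -> converges_to u l -> S hzero l).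
  { intros u l Hu Hl. apply (sa_closed S HS (fun _ => hzero) u); auto.
    intros eps He. exists 0%nat. intros n _. replace (hsub hzero hzero) with (@hzero X) by vec.
    unfold hnorm. rewrite hinner_zero_l. simpl. rewrite sqrt_0. exact He. }
  assert (Ma : forall a b, S hzero a -> S hzero b -> S hzero (hadd a b)).
  { intros a b Ha Hb. pose proof (Sa _ _ _ _ Ha Hb). rewrite hadd_zero in H. exact H. }
  assert (Ms : forall c a, S hzero a -> S hzero (hscal c a)).
  { intros c a Ha. pose proof (Ss c _ _ Ha). replace (hscal c hzero) with (@hzero X) in H by vec. exact H. }
  destruct (proj_thm (fun g => S hzero g) S0 Ma Ms Mc f) as [p [Sp Hp]].
  exists (hsub f p). split.
  - replace x with (hsub x hzero) by vec. apply rel_sub; auto.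
  - intros y g [-> Hg]. specialize (Hp g Hg). expand. rewrite Hp. apply C_ext; simpl; ring.
Qed.

Lemma est1 {X : Hilbert} (S : rel X) m x s0 q : is_subspace S -> self_adjoint S ->
  S x s0 -> T_s S x q ->
  nsq q <= nsq (hsub s0 (hscal (mkC 0 m) x)) /\
  m * m * nsq x <= nsq (hsub s0 (hscal (mkC 0 m) x)).
Proof.
  intros HSs HS Hs [Hq Hq2].
  set (p := hsub s0 q).
  assert (Sp : S hzero p).
  { replace (@hzero X) with (hsub x x) by vec. apply rel_sub; auto. }
  assert (Hqp : hinner q p = C0).
  { specialize (Hq2 hzero p (conj eq_refl Sp)). expand.
    pose proof (f_equal Re Hq2). pose proof (f_equal Im Hq2). simpl in *. apply C_ext; simpl; lra. }
  assert (Hpx : hinner p x = C0).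
  { destruct HS as [HS1 _]. rewrite (HS1 _ _ Sp x s0 Hs). apply hinner_zero_l. }
  assert (Rq : Im (hinner q x) = 0) by (apply (herm_real S x q HS Hq)).
  assert (Es : s0 = hadd p q) by (unfold p; vec).
  clearbody p. rewrite Es. pose proof (nsq_nonneg p). pose proof (nsq_nonneg x). unfold nsq in *.
  expand. rewrite (hinner_sym _ q p), (hinner_sym _ p x), Hqp, Hpx. simpl.
  rewrite (sym_Re q x), (sym_Im q x), ?(Im_self x), ?(Im_self q), ?(Im_self p).
  rewrite Rq. pose proof (hinner_pos _ q). split; nra.
Qed.

Lemma bnd {X : Hilbert} (S A : rel X) a b k m :
  is_subspace S -> self_adjoint S ->
  (forall x u v, T_s S x v -> T_s A x u -> hnorm u <= a * hnorm v + b * hnorm x) ->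
  0 <= a -> 0 <= b -> 0 <= k -> b * b <= k * k * (m * m) ->
  forall x s0 q v, S x s0 -> T_s S x q -> T_s A x v ->
  hnorm v <= (a + k) * hnorm (hsub s0 (hscal (mkC 0 m) x)).
Proof.
  intros HSs HS HB Ha Hb Hk Hbk x s0 q v Hs Hq Hv.
  destruct (est1 S m x s0 q HSs HS Hs Hq) as [E1 E2].
  pose proof (HB x v q Hq Hv).
  set (u := hsub s0 (hscal (mkC 0 m) x)) in *.
  pose proof (hnorm_sq q); pose proof (hnorm_sq u); pose proof (hnorm_sq x).
  pose proof (hnorm_nonneg q); pose proof (hnorm_nonneg u); pose proof (hnorm_nonneg x).
  assert (A1 : hnorm q <= hnorm u) by nra.
  assert (A2 : (b * hnorm x) * (b * hnorm x) <= (k * hnorm u) * (k * hnorm u)).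
  { assert (b * b * nsq x <= k * k * (m * m) * nsq x) by (apply Rmult_le_compat_r; [apply nsq_nonneg| auto]).
    nra. }
  assert (A3 : b * hnorm x <= k * hnorm u).
  { destruct (Rle_dec (b * hnorm x) (k * hnorm u)); auto.
    assert (0 <= k * hnorm u) by nra. nra. }
  nra.
Qed.

Lemma fixpt {X : Hilbert} (S A : rel X) a b k m :
  is_subspace S -> self_adjoint S -> is_subspace A ->
  (forall x, dom (T_s S) x -> dom (T_s A) x) ->
  (forall x u v, T_s S x v -> T_s A x u -> hnorm u <= a * hnorm v + b * hnorm x) ->
  0 <= a -> 0 <= b -> 0 <= k -> b * b <= k * k * (m * m) -> a + k < 1 -> m <> 0 ->
  forall w, exists x s0 v, S x s0 /\ T_s A x v /\ hadd (hsub s0 (hscal (mkC 0 m) x)) v = w.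
Proof.
  intros HSs HS HAs Hdom HB Ha Hb Hk Hbk Hak Hm w.
  set (lam := mkC 0 m). set (c := a + k).
  assert (Ex : forall u, exists v, exists x s0 q, S x s0 /\ hsub s0 (hscal lam x) = u /\
               T_s S x q /\ T_s A x v).
  { intro u. destruct (surj S HSs HS m Hm u) as [x [s0 [Hs Hu]]].
    destruct (Ts_exists S HSs HS x s0 Hs) as [q Hq].
    destruct (Hdom x (ex_intro _ q Hq)) as [v Hv].
    exists v, x, s0, q. auto. }
  set (V := fun u => proj1_sig (constructive_indefinite_description _ (Ex u))).
  assert (HV : forall u, exists x s0 q, S x s0 /\ hsub s0 (hscal lam x) = u /\
               T_s S x q /\ T_s A x (V u))
    by (intro u; exact (proj2_sig (constructive_indefinite_description _ (Ex u)))).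
  clearbody V.
  assert (HTS := Ts_subspace S HSs). assert (HTA := Ts_subspace A HAs).
  assert (Lip : forall u1 u2, hnorm (hsub (V u1) (V u2)) <= c * hnorm (hsub u1 u2)).
  { intros u1 u2. destruct (HV u1) as [x1 [s1 [q1 [A1 [B1 [C1 D1]]]]]].
    destruct (HV u2) as [x2 [s2 [q2 [A2 [B2 [C2 D2]]]]]].
    replace (hsub u1 u2) with (hsub (hsub s1 s2) (hscal lam (hsub x1 x2)))
      by (rewrite <- B1, <- B2; unfold lam; vec).
    apply (bnd S A a b k m HSs HS HB Ha Hb Hk Hbk (hsub x1 x2) (hsub s1 s2) (hsub q1 q2));
      apply rel_sub; auto. }
  assert (Hc0 : 0 <= c) by (unfold c; lra). assert (Hc1 : c < 1) by (unfold c; lra).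
  clearbody c.
  set (U := fix U n := match n with O => w | S n => hsub w (V (U n)) end).
  assert (US : forall n, U (Datatypes.S n) = hsub w (V (U n))) by reflexivity.
  set (d0 := hnorm (hsub (U 1%nat) (U 0%nat))).
  assert (Hd : forall n, hnorm (hsub (U (Datatypes.S n)) (U n)) <= c ^ n * d0).
  { induction n.
    - rewrite pow_O, Rmult_1_l. unfold d0. apply Rle_refl.
    - assert (E : forall y z, hsub (hsub w (V y)) (hsub w (V z)) = hsub (V z) (V y)) by (intros; vec).
      rewrite (US (Datatypes.S n)). rewrite (US n) at 2. rewrite E.
      eapply Rle_trans; [apply Lip|]. rewrite dist_sym. simpl.
      rewrite Rmult_assoc. apply Rmult_le_compat_l; auto. }
  assert (Hd0 : 0 <= d0) by apply hnorm_nonneg.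
  assert (Hj : forall n j, hnorm (hsub (U (j + n)%nat) (U n)) * (1 - c) <= d0 * c ^ n * (1 - c ^ j)).
  { intros n j. induction j.
    - simpl. replace (hsub (U n) (U n)) with (@hzero X) by vec.
      unfold hnorm. rewrite hinner_zero_l. simpl. rewrite sqrt_0. nra.
    - pose proof (dist_tri (U (Datatypes.S j + n)%nat) (U (j + n)%nat) (U n)).
      pose proof (Hd (j + n)%nat). simpl (Datatypes.S j + n)%nat in *.
      rewrite pow_add in H0. change (c ^ Datatypes.S j) with (c * c ^ j).
      assert (0 <= c ^ n) by (apply pow_le; auto).
      assert (0 <= c ^ j) by (apply pow_le; auto).
      assert (0 <= d0 * c ^ n * c ^ j) by (apply Rmult_le_pos; [apply Rmult_le_pos|]; auto). nra. }
  assert (Cu : Cauchy U).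
  { intros eps He.
    destruct (pow_lt_1_zero c) with (y := eps * (1 - c) / (d0 + 1)) as [N HN].
    { rewrite Rabs_pos_eq; lra. } { apply Rdiv_lt_0_compat; nra. }
    exists N.
    assert (Key : forall n j, (N <= n)%nat -> hnorm (hsub (U (j + n)%nat) (U n)) < eps).
    { intros n j Hn. specialize (HN n Hn). rewrite Rabs_pos_eq in HN by (apply pow_le; auto).
      pose proof (Hj n j). assert (0 <= c ^ j) by (apply pow_le; auto).
      assert (0 <= c ^ n) by (apply pow_le; auto).
      assert (c ^ n * (d0 + 1) < eps * (1 - c)).
      { replace (eps * (1 - c)) with (eps * (1 - c) / (d0 + 1) * (d0 + 1)) by (field; lra).
        apply Rmult_lt_compat_r; lra. }
      apply (Rmult_lt_reg_r (1 - c)); [lra|]. assert (d0 * c ^ n * (1 - c ^ j) <= d0 * c ^ n) by (assert (0 <= d0 * c ^ n * c ^ j) by (apply Rmult_le_pos; [apply Rmult_le_pos|]; auto); nra). assert (d0 * c ^ n <= c ^ n * (d0 + 1)) by nra. lra. }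
    intros m0 n Hm0 Hn. destruct (Nat.le_ge_cases n m0) as [L|L].
    - replace m0 with ((m0 - n) + n)%nat by lia. apply Key; auto.
    - rewrite dist_sym. replace n with ((n - m0) + m0)%nat by lia. apply Key; auto. }
  destruct (complete U Cu) as [l Hl].
  assert (Fix : l = hsub w (V l)).
  { apply hsub_eq0, norm_small. intros eps He.
    destruct (Hl (eps/2)) as [N HN]; [lra|].
    pose proof (dist_tri l (U (Datatypes.S N)) (hsub w (V l))).
    rewrite US in H. replace (hsub (hsub w (V (U N))) (hsub w (V l))) with (hsub (V l) (V (U N))) in H by vec.
    pose proof (Lip l (U N)). pose proof (HN N (le_n N)). pose proof (HN (Datatypes.S N) (le_S _ _ (le_n N))).
    rewrite dist_sym in H2. rewrite US in H2. rewrite (dist_sym l (U N)) in H0.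
    pose proof (hnorm_nonneg (hsub (U N) l)). nra. }
  destruct (HV l) as [x [s0 [q [A1 [B1 [C1 D1]]]]]].
  exists x, s0, (V l). split; auto. split; auto.
  rewrite B1. rewrite Fix at 1. vec.
Qed.

Lemma sum_herm {X : Hilbert} (S A : rel X) : self_adjoint S -> hermitian A ->
  forall x k x' k', rel_sum S A x k -> rel_sum S A x' k' -> hinner k x' = hinner x k'.
Proof.
  intros [HS _] HA x k x' k' [f [g [Hf [Hg ->]]]] [f' [g' [Hf' [Hg' ->]]]].
  pose proof (HS _ _ Hf _ _ Hf'). pose proof (HA _ _ Hg _ _ Hg').
  rewrite hinner_add, hinner_add_r, H, H0. reflexivity.
Qed.

Theorem theorem4p1 (X : Hilbert) (S A : rel X) :
  is_subspace S -> self_adjoint S ->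
  is_subspace A -> is_closed A -> hermitian A ->
  (forall x, dom S x -> dom A x) ->
  rel_bounded (T_s A) (T_s S) ->
  (exists r, rel_bound (T_s A) (T_s S) r /\ r < 1) ->
  is_subspace (rel_sum S A) /\ self_adjoint (rel_sum S A).
Proof.
  intros HSs HS HAs _ HAh _ [HbD _] [r [Hr Hr1]].
  assert (Ea : exists a, bound_set (T_s A) (T_s S) a /\ a < 1).
  { apply NNPP. intro Hn. destruct Hr as [_ Hr2].
    assert ((r + 1) / 2 <= r); [|lra]. apply Hr2. intros a Ha.
    destruct (Rle_dec ((r + 1) / 2) a) as [|Hl]; auto. exfalso. apply Hn. exists a. split; auto. lra. }
  destruct Ea as [a [[Ha0 [b [Hb0 HB]]] Ha1]].
  set (k := (1 - a) / 2). set (m := b / k + 1).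
  assert (Hk : 0 < k) by (unfold k; lra).
  assert (Hkm : k * m = b + k) by (unfold m; field; lra).
  assert (Hm : 0 < m) by (unfold m; assert (0 <= b / k) by (unfold Rdiv; apply Rmult_le_pos; [lra| apply Rlt_le, Rinv_0_lt_compat; lra]); lra).
  assert (Hbk : b * b <= k * k * (m * m)) by nra.
  assert (Hbk' : b * b <= k * k * (- m * - m)) by nra.
  assert (Hak : a + k < 1) by (unfold k; lra).
  assert (HB' : forall x u v, T_s S x v -> T_s A x u -> hnorm u <= a * hnorm v + b * hnorm x)
    by (intros; eapply HB; eauto).
  assert (FP := fixpt S A a b k m HSs HS HAs HbD HB' Ha0 Hb0 (Rlt_le _ _ Hk) Hbk Hak (Rgt_not_eq _ _ Hm)).
  assert (FP' := fixpt S A a b k (- m) HSs HS HAs HbD HB' Ha0 Hb0 (Rlt_le _ _ Hk) Hbk' Hak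
                   ltac:(lra)).
  assert (Herm := sum_herm S A HS HAh).
  split; [|split].
  - destruct HSs as [S0 [Sa Ss]]. destruct HAs as [A0 [Aa As]]. split; [|split].
    + exists hzero, hzero. split; auto. split; auto. vec.
    + intros x f y g [f1 [g1 [H1 [H2 ->]]]] [f2 [g2 [H3 [H4 ->]]]].
      exists (hadd f1 f2), (hadd g1 g2). split; auto. split; auto. vec.
    + intros c x f [f1 [g1 [H1 [H2 ->]]]]. exists (hscal c f1), (hscal c g1).
      split; auto. split; auto. vec.
  - intros x f H x' f' H'. apply (Herm x f x' f' H H').
  - intros y h Hadj.
    destruct (FP (hsub h (hscal (mkC 0 m) y))) as [x [s0 [v [Hs [Hv Hw]]]]].
    assert (Hxk : rel_sum S A x (hadd s0 v)) by (exists s0, v; split; auto; split; [apply Hv| auto]).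
    assert (Cl : forall x' k', rel_sum S A x' k' ->
               hinner (hscal (mkC 0 m) (hsub y x)) x' = hinner (hsub y x) k').
    { intros x' k' H'. pose proof (Hadj x' k' H') as E1. pose proof (Herm _ _ _ _ Hxk H') as E2.
      pose proof (f_equal (fun t => hinner t x') Hw) as E3. simpl in E3.
      expand.
      pose proof (f_equal Re E1); pose proof (f_equal Im E1); pose proof (f_equal Re E2);
      pose proof (f_equal Im E2); pose proof (f_equal Re E3); pose proof (f_equal Im E3).
      simpl in *. apply C_ext; simpl; nra. }
    destruct (FP' (hsub y x)) as [x2 [s2 [v2 [Hs2 [Hv2 Hw2]]]]].
    assert (Hxk2 : rel_sum S A x2 (hadd s2 v2)) by (exists s2, v2; split; auto; split; [apply Hv2| auto]).
    pose proof (Cl _ _ Hxk2) as E.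
    set (z := hsub y x) in *.
    assert (Ez : hinner z z = C0).
    { rewrite <- Hw2 at 2. expand.
      pose proof (f_equal Re E); pose proof (f_equal Im E). simpl in *. apply C_ext; simpl; nra. }
    apply hinner_def in Ez. unfold z in Ez. apply hsub_eq0 in Ez. subst y.
    exists s0, v. split; auto. split; [apply Hv|].
    apply hext. intro z0. pose proof (f_equal (fun t => hinner t z0) Hw) as E3. simpl in E3.
    expand. pose proof (f_equal Re E3); pose proof (f_equal Im E3). simpl in *.
    apply C_ext; simpl; nra.
Qed.
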